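(* Let $I\subseteq\mathbb{R}_+$ be a nonempty, non-singleton interval, let $n\in\mathbb{N}$, and let $\Phi: I\to\mathbb{R}_+$ be subadditive of order $n$. Then the function $t\mapsto \frac{\Phi(t)}{t^n}$ is subadditive on $I\cap\,]0,\infty[$, i.e. $\frac{\Phi(x+y)}{(x+y)^n}\leq\frac{\Phi(x)}{x^n}+\frac{\Phi(y)}{y^n}$ for all $x,y\in I\cap\,]0,\infty[$ with $x+y\in I$.
   Context: $\mathbb{R}_+$ denotes the set of nonnegative real numbers. For $n\in\mathbb{N}$, a function $\Phi: I\to\mathbb{R}_+$ is called subadditive of order $n$ if for all $x,y\in I$ with $y>0$ and $x+y\in I$ one has $\Phi(x+y)\leq \Phi(x)+\frac{(x+y)^n-x^n}{y^n}\Phi(y)$. *)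

(* Defs.v *)
From Stdlib Require Import Reals.
Open Scope R_scope.

Definition is_interval (I : R -> Prop) : Prop :=
  forall x y z, I x -> I z -> x <= y <= z -> I y.

Definition subadditive_of_order (I : R -> Prop) (n : nat) (Phi : R -> R) : Prop :=
  forall x y, I x -> I y -> 0 < y -> I (x + y) ->
    Phi (x + y) <= Phi x + ((x + y) ^ n - x ^ n) / y ^ n * Phi y.

(* Main.v *)
Require Import Defs.
From Stdlib Require Import Reals Lra.
Open Scope R_scope.

Theorem theorem2p4 (I : R -> Prop) (n : nat) (Phi : R -> R) :
  is_interval I ->
  (forall t, I t -> 0 <= t) ->
  (exists a b, I a /\ I b /\ a <> b) ->
  (forall t, I t -> 0 <= Phi t) ->
  subadditive_of_order I n Phi ->
  forall x y, I x -> 0 < x -> I y -> 0 < y -> I (x + y) ->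
    Phi (x + y) / (x + y) ^ n <= Phi x / x ^ n + Phi y / y ^ n.
Proof.
  intros _ _ _ Hpos Hsub x y Ix x0 Iy y0 Ixy.
  pose proof (Hsub x y Ix Iy y0 Ixy) as H.
  pose proof (Hpos x Ix) as P0. pose proof (Hpos y Iy) as Q0.
  assert (a0 : 0 < x ^ n) by (apply pow_lt; lra).
  assert (b0 : 0 < y ^ n) by (apply pow_lt; lra).
  assert (s0 : 0 < (x + y) ^ n) by (apply pow_lt; lra).
  assert (As : x ^ n <= (x + y) ^ n) by (apply pow_incr; lra).
  revert H P0 Q0 a0 b0 s0 As.
  generalize (Phi (x+y)) (Phi x) (Phi y) (x ^ n) (y ^ n) ((x+y)^n).
  intros F P Q a b s H P0 Q0 a0 b0 s0 As.
  assert (h1 : F / s <= (P + (s - a) / b * Q) / s).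
  { unfold Rdiv at 1 3. apply Rmult_le_compat_r; [left; apply Rinv_0_lt_compat; lra | lra]. }
  assert (h2 : (P + (s - a) / b * Q) / s = P / s + Q / b - a * Q / (b * s)) by (field; lra).
  assert (h3 : P / s <= P / a).
  { unfold Rdiv. apply Rmult_le_compat_l; [lra|]. apply Rinv_le_contravar; lra. }
  assert (h4 : 0 <= a * Q / (b * s)).
  { unfold Rdiv. apply Rmult_le_pos; [apply Rmult_le_pos; lra|].
    left; apply Rinv_0_lt_compat; apply Rmult_lt_0_compat; lra. }
  lra.
Qed.
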